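(* Let $k\ge 2$, $n=2^k$, and run Jakobsson's pebble-update procedure for $n/2$ steps. Then the only pebble discarded during these $n/2$ steps is the pebble with initial label $k-1$ (initially at position $n/2$); in particular the pebble with initial label $k$ (at the seed position $n$) and all pebbles with initial labels $j\le k-2$ are not discarded.
   Context: Jakobsson's pebble-update procedure (hash-chain preimage traversal). Fix $k\ge 1$ and $n=2^k$. There are $k$ pebbles, identified by their initial label $j\in\{1,\dots,k\}$. Pebble $j$ has two fixed constants $S_j=3\cdot 2^j$ (start increment) and $D_j=2^{j+1}$ (destination increment), and two integer fields $\mathrm{Position}$ and $\mathrm{Destination}$ (which may be set to $+\infty$). Initially $\mathrm{Position}=\mathrm{Destination}=2^j$ for pebble $j$, and a counter $c$ equals $0$. The pebbles are kept sorted by $\mathrm{Position}$, and ''the first pebble'' means the pebble with the smallest $\mathrm{Position}$. One step: (i) if $c=n$, stop; otherwise $c\leftarrow c+1$; (ii) for every pebble with $\mathrm{Position}\ne\mathrm{Destination}$, set $\mathrm{Position}\leftarrow\mathrm{Position}-2$; (iii) if $c$ is even, the first pebble (say with initial label $j$) makes a backward move: $\mathrm{Position}\leftarrow \mathrm{Position}+S_j$, $\mathrm{Destination}\leftarrow\mathrm{Destination}+D_j$; if the new Destination exceeds $n$, both fields are set to $+\infty$ and the pebble is said to be discarded; then the pebbles are re-sorted by $\mathrm{Position}$. (Each pebble also stores a hash-chain value, which does not influence the evolution of the Position and Destination fields.) *)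

(* Defs.v *)
From Stdlib Require Import ZArith List Arith Lia.
Import ListNotations.
Open Scope Z_scope.

Inductive ext := Fin (z : Z) | Inf.

Definition ext_eqb (a b : ext) : bool :=
  match a, b with
  | Fin x, Fin y => Z.eqb x y
  | Inf, Inf => true
  | _, _ => false
  end.

Definition ext_leb (a b : ext) : bool :=
  match a, b with
  | Fin x, Fin y => Z.leb x y
  | _, Inf => true
  | Inf, Fin _ => false
  end.

Definition ext_add (a : ext) (d : Z) : ext :=
  match a with Fin x => Fin (x + d) | Inf => Inf end.

Record pebble := mkPebble { label : nat; pos : ext; dest : ext }.

Definition S_ (j : nat) : Z := 3 * 2 ^ Z.of_nat j.
Definition D_ (j : nat) : Z := 2 ^ (Z.of_nat j + 1).

Fixpoint insert_peb (p : pebble) (l : list pebble) : list pebble :=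
  match l with
  | [] => [p]
  | q :: t => if ext_leb (pos p) (pos q) then p :: q :: t else q :: insert_peb p t
  end.

Fixpoint sort_peb (l : list pebble) : list pebble :=
  match l with
  | [] => []
  | p :: t => insert_peb p (sort_peb t)
  end.

Definition dec_peb (p : pebble) : pebble :=
  if ext_eqb (pos p) (dest p) then p
  else mkPebble (label p) (ext_add (pos p) (-2)) (dest p).

Definition back_peb (n : Z) (p : pebble) : pebble :=
  let j := label p in
  let np := ext_add (pos p) (S_ j) in
  let nd := ext_add (dest p) (D_ j) in
  match nd with
  | Fin d => if Z.ltb n d then mkPebble j Inf Inf else mkPebble j np nd
  | Inf => mkPebble j Inf Inf
  end.

(* A state: counter c and the list of pebbles, sorted by Position
   (head = first pebble). *)
Definition state := (nat * list pebble)%type.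

Definition step (n : nat) (s : state) : state :=
  let (c, ps) := s in
  if Nat.eqb c n then s
  else
    let c' := S c in
    let ps1 := map dec_peb ps in
    let ps2 := if Nat.even c' then
                 match ps1 with
                 | [] => []
                 | h :: t => back_peb (Z.of_nat n) h :: t
                 end
               else ps1 in
    (c', sort_peb ps2).

Definition init_state (k : nat) : state :=
  (0%nat, map (fun j => mkPebble j (Fin (2 ^ Z.of_nat j)) (Fin (2 ^ Z.of_nat j)))
              (seq 1 k)).

Definition state_after (k m : nat) : state :=
  Nat.iter m (step (2 ^ k)) (init_state k).

Definition discarded_in (s : state) (j : nat) : Prop :=
  exists p, In p (snd s) /\ label p = j /\ dest p = Inf.

(* Main.v *)
Require Import Defs.
From Stdlib Require Import ZArith List Arith Lia Permutation.
Import ListNotations.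
Open Scope Z_scope.

Definition qz (m c : Z) := (c + m) / (2*m).
Definition Dz m c := (2*qz m c + 1)*m.
Definition Pz m c := Z.max (Dz m c) (Dz m c + m - 2*(c - (2*qz m c - 1)*m)).

Lemma qz_nomove m c : 0 < m -> (c+1+m) mod (2*m) <> 0 -> qz m (c+1) = qz m c.
Proof.
  intros Hm Hmod. unfold qz.
  pose proof (Z.div_mod (c+m) (2*m) ltac:(lia)) as Hd.
  pose proof (Z.mod_pos_bound (c+m) (2*m) ltac:(lia)) as Hb.
  set (q := (c+m)/(2*m)) in *. set (r := (c+m) mod (2*m)) in *.
  destruct (Z.eq_dec (r+1) (2*m)) as [E|E].
  - exfalso. apply Hmod. replace (c+1+m) with ((q+1)*(2*m)) by lia.
    apply Z_mod_mult.
  - symmetry. apply Z.div_unique with (r+1); lia.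
Qed.

Lemma qz_move m c : 0 < m -> (c+1+m) mod (2*m) = 0 ->
  qz m (c+1) = qz m c + 1 /\ Dz m c = c + 1.
Proof.
  intros Hm Hmod. unfold Dz, qz.
  pose proof (Z_div_exact_full_2 (c+1+m) (2*m) ltac:(lia) Hmod) as He.
  set (a := (c+1+m)/(2*m)) in *.
  assert (Hq : (c+m)/(2*m) = a - 1).
  { symmetry. apply Z.div_unique with (2*m-1); lia. }
  replace (c+1+m) with (c+m+1) in * by lia.
  rewrite Hq. split; [|lia].
  replace (c+1+m) with (c+m+1) by lia. fold a. lia.
Qed.

Lemma Dz_ge m c : 0 < m -> 0 <= c -> c + 1 <= Dz m c.
Proof.
  intros Hm Hc. unfold Dz, qz.
  pose proof (Z.div_mod (c+m) (2*m) ltac:(lia)) as Hd.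
  pose proof (Z.mod_pos_bound (c+m) (2*m) ltac:(lia)) as Hb.
  set (q := (c+m)/(2*m)) in *. set (r := (c+m) mod (2*m)) in *. lia.
Qed.

Lemma Dz_eq_move m c : 0 < m -> 0 <= c -> Dz m c = c + 1 -> (c+1+m) mod (2*m) = 0.
Proof.
  intros Hm Hc H. unfold Dz, qz in H.
  replace (c+1+m) with ((qz m c + 1)*(2*m)) by (unfold qz; lia).
  apply Z_mod_mult.
Qed.

Lemma Dz_le m c : 0 < m -> Dz m c <= c + 2*m.
Proof.
  intros Hm. unfold Dz, qz.
  pose proof (Z.div_mod (c+m) (2*m) ltac:(lia)) as Hd.
  pose proof (Z.mod_pos_bound (c+m) (2*m) ltac:(lia)) as Hb.
  set (q := (c+m)/(2*m)) in *. set (r := (c+m) mod (2*m)) in *. lia.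
Qed.

Lemma Dz_small m c : 0 < m -> 0 <= c -> c < m -> Dz m c = m.
Proof.
  intros. unfold Dz, qz. rewrite Z.div_small by lia. lia.
Qed.

Lemma Pz_ge m c : Dz m c <= Pz m c.
Proof. unfold Pz. lia. Qed.

Definition Pp (j : nat) (t : nat) : pebble :=
  let m := 2 ^ Z.of_nat j in
  mkPebble j (Fin (Pz m (Z.of_nat t))) (Fin (Dz m (Z.of_nat t))).

Definition Qp (n : Z) (j t : nat) : pebble :=
  if n <? Dz (2 ^ Z.of_nat j) (Z.of_nat t) then mkPebble j Inf Inf else Pp j t.

Lemma pow_even (j : nat) : (1 <= j)%nat -> exists h, 2 ^ Z.of_nat j = 2 * h /\ 1 <= h.
Proof.
  intros Hj. exists (2 ^ Z.of_nat (j - 1)). split.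
  - replace (Z.of_nat j) with (Z.succ (Z.of_nat (j-1))) by lia.
    rewrite Z.pow_succ_r by lia. lia.
  - pose proof (Z.pow_pos_nonneg 2 (Z.of_nat (j-1)) ltac:(lia) ltac:(lia)). lia.
Qed.

Lemma dec_nomove j t : (1 <= j)%nat ->
  (Z.of_nat t + 1 + 2 ^ Z.of_nat j) mod (2 * 2 ^ Z.of_nat j) <> 0 ->
  dec_peb (Pp j t) = Pp j (S t).
Proof.
  intros Hj Hmod. destruct (pow_even j Hj) as [h [Hh Hh1]].
  unfold dec_peb, Pp. rewrite Nat2Z.inj_succ, <- Z.add_1_r. cbn [ext_eqb pos dest label ext_add].
  set (m := 2 ^ Z.of_nat j) in *. set (c := Z.of_nat t) in *.
  assert (Hc : 0 <= c) by lia.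
  pose proof (qz_nomove m c ltac:(lia) Hmod) as Hq.
  unfold Pz, Dz. rewrite Hq. set (q := qz m c).
  destruct (Z.eqb_spec (Z.max ((2 * q + 1) * m) ((2 * q + 1) * m + m - 2 * (c - (2 * q - 1) * m)))
     ((2 * q + 1) * m)) as [E|E].
  - f_equal. f_equal. lia.
  - f_equal. f_equal.
    assert (Heq : (2*q+1)*m + m - 2*(c - (2*q-1)*m) - (2*q+1)*m = 2*(h - c + (4*q-2)*h))
      by (rewrite Hh; ring).
    lia.
Qed.

Lemma dec_move j t : (1 <= j)%nat ->
  (Z.of_nat t + 1 + 2 ^ Z.of_nat j) mod (2 * 2 ^ Z.of_nat j) = 0 ->
  forall n, back_peb n (dec_peb (Pp j t)) = Qp n j (S t).
Proof.
  intros Hj Hmod n. destruct (pow_even j Hj) as [h [Hh Hh1]].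
  unfold dec_peb, Pp, Qp, back_peb. rewrite Nat2Z.inj_succ, <- Z.add_1_r. cbn [ext_eqb pos dest label ext_add].
  set (m := 2 ^ Z.of_nat j) in *. set (c := Z.of_nat t) in *.
  assert (Hc : 0 <= c) by lia.
  destruct (qz_move m c ltac:(lia) Hmod) as [Hq HD].
  assert (HP : Pz m c = Dz m c).
  { unfold Pz. rewrite HD. unfold Dz in HD |- *. lia. }
  rewrite HP, Z.eqb_refl. simpl.
  assert (HD' : Dz m c + D_ j = Dz m (c+1)).
  { unfold D_, Dz. rewrite Hq. rewrite Z.pow_add_r by lia. fold m. lia. }
  rewrite HD'.
  destruct (n <? Dz m (c+1)); [reflexivity|].
  unfold Pp. fold m. fold c. replace (Z.of_nat (S t)) with (c+1) by lia. f_equal. f_equal.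
  unfold S_, Pz. fold m. unfold Dz in *. rewrite Hq in *. lia.
Qed.

Lemma Pz_move m c : 0 < m -> 0 <= c -> (c+1+m) mod (2*m) = 0 -> Pz m c = c + 1.
Proof.
  intros Hm Hc Hmod. destruct (qz_move m c Hm Hmod) as [Hq HD].
  unfold Pz. rewrite HD. unfold Dz in HD. lia.
Qed.

Lemma Dz_nomove m c : 0 < m -> (c+1+m) mod (2*m) <> 0 -> Dz m (c+1) = Dz m c.
Proof. intros. unfold Dz. rewrite qz_nomove; auto. Qed.

Lemma uniq_move (i l : nat) c : (i < l)%nat ->
  (c + 2 ^ Z.of_nat i) mod (2 * 2 ^ Z.of_nat i) = 0 ->
  (c + 2 ^ Z.of_nat l) mod (2 * 2 ^ Z.of_nat l) = 0 -> False.
Proof.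
  intros Hil H1 H2.
  set (u := 2 ^ Z.of_nat i) in *.
  assert (Hu : 0 < u) by (apply Z.pow_pos_nonneg; lia).
  assert (Hw : 2 ^ Z.of_nat l = 2 * u * 2 ^ Z.of_nat (l - i - 1)).
  { unfold u. replace (Z.of_nat l) with (Z.of_nat i + 1 + Z.of_nat (l-i-1)) by lia.
    rewrite !Z.pow_add_r by lia. ring. }
  rewrite Hw in H2. set (w := 2 ^ Z.of_nat (l - i - 1)) in *.
  assert (Hw0 : 0 < w) by (apply Z.pow_pos_nonneg; lia).
  pose proof (Z_div_exact_full_2 (c+u) (2*u) ltac:(lia) H1) as E1.
  assert (0 < u*w) by (apply Z.mul_pos_pos; lia).
  pose proof (Z_div_exact_full_2 (c+2*u*w) (2*(2*u*w)) ltac:(lia) H2) as E2.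
  set (a := (c + u) / (2 * u)) in *. set (b := (c + 2*u*w) / (2 * (2*u*w))) in *.
  assert (HH : u * (2*a - 1 + 2*w - 4*w*b) = 0) by nia.
  apply Z.mul_eq_0 in HH. lia.
Qed.

Lemma decomp2 (x : nat) : (1 <= x)%nat -> exists j r : nat, x = (2 ^ j * (2 * r + 1))%nat.
Proof.
  induction x as [x IH] using (well_founded_induction lt_wf). intros Hx.
  destruct (Nat.Even_or_Odd x) as [[y Hy]|[y Hy]].
  - destruct (IH y ltac:(lia) ltac:(lia)) as [j [r Hr]].
    exists (S j), r. rewrite Nat.pow_succ_r'. lia.
  - exists 0%nat, y. simpl. lia.
Qed.

Lemma exists_move (x : nat) (k : nat) : (1 <= x)%nat -> Nat.even x = true ->
  (x <= 2 ^ (k - 1))%nat -> (1 <= k)%nat ->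
  exists j : nat, (1 <= j <= k - 1)%nat /\
    (Z.of_nat x + 2 ^ Z.of_nat j) mod (2 * 2 ^ Z.of_nat j) = 0.
Proof.
  intros Hx He Hle Hk. destruct (decomp2 x Hx) as [j [r Hr]].
  exists j. split; [split|].
  - destruct j as [|j]; [|lia]. exfalso.
    assert (Hx1 : x = (1 + 2*r)%nat) by (simpl in Hr; lia). rewrite Hx1 in He.
    rewrite Nat.even_add_mul_2 in He. discriminate.
  - destruct (Nat.le_gt_cases j (k-1)) as [H|H]; [exact H|exfalso].
    assert (2 ^ k <= 2 ^ j)%nat by (apply Nat.pow_le_mono_r; lia).
    assert (2 ^ (k-1) < 2 ^ k)%nat by (apply Nat.pow_lt_mono_r; lia).
    nia.
  - rewrite Hr. rewrite Nat2Z.inj_mul, Nat2Z.inj_pow. change (Z.of_nat 2) with 2.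
    replace (2 ^ Z.of_nat j * Z.of_nat (2 * r + 1) + 2 ^ Z.of_nat j)
      with ((Z.of_nat r + 1) * (2 * 2 ^ Z.of_nat j)) by lia.
    apply Z_mod_mult.
Qed.

Lemma insert_perm p l : Permutation (insert_peb p l) (p :: l).
Proof.
  induction l as [|q l IH]; simpl; [auto|].
  destruct (ext_leb (pos p) (pos q)); [auto|].
  eapply perm_trans; [apply perm_skip, IH|]. apply perm_swap.
Qed.

Lemma sort_perm l : Permutation (sort_peb l) l.
Proof.
  induction l as [|p l IH]; simpl; [auto|].
  eapply perm_trans; [apply insert_perm|]. auto.
Qed.

Definition HeadMin (l : list pebble) : Prop :=
  match l with [] => True | h :: _ => forall x, In x l -> ext_leb (pos h) (pos x) = true end.

Lemma ext_leb_refl a : ext_leb a a = true.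
Proof. destruct a; simpl; auto. apply Z.leb_refl. Qed.

Lemma ext_leb_trans a b c : ext_leb a b = true -> ext_leb b c = true -> ext_leb a c = true.
Proof.
  destruct a, b, c; simpl; auto; try discriminate.
  rewrite !Z.leb_le. lia.
Qed.

Lemma ext_leb_total a b : ext_leb a b = false -> ext_leb b a = true.
Proof.
  destruct a, b; simpl; auto; try discriminate.
  rewrite Z.leb_gt, Z.leb_le. lia.
Qed.

Lemma insert_headmin p l : HeadMin l -> HeadMin (insert_peb p l).
Proof.
  destruct l as [|q l]; simpl.
  - intros _ x [<-|[]]. apply ext_leb_refl.
  - intros H. destruct (ext_leb (pos p) (pos q)) eqn:E; simpl.
    + intros x [<-|Hx]; [apply ext_leb_refl|].
      apply ext_leb_trans with (pos q); auto.
    + intros x [<-|Hx]; [apply ext_leb_refl|].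
      apply Permutation_in with (l' := p :: l) in Hx; [|apply insert_perm].
      destruct Hx as [<-|Hx]; [apply ext_leb_total; auto|]. apply H; simpl; auto.
Qed.

Lemma sort_headmin l : HeadMin (sort_peb l).
Proof.
  induction l as [|p l IH]; simpl; [exact I|]. apply insert_headmin; auto.
Qed.

Lemma NZ_eq (k : nat) : (1 <= k)%nat ->
  Z.of_nat (2 ^ k / 2) = 2 ^ (Z.of_nat k - 1) /\ Z.of_nat (2 ^ k) = 2 * 2 ^ (Z.of_nat k - 1).
Proof.
  intros Hk.
  assert (H : (2 ^ k = 2 ^ (k-1) * 2)%nat).
  { replace k with (S (k-1)) at 1 by lia. rewrite Nat.pow_succ_r'. lia. }
  rewrite H, Nat.div_mul by lia. rewrite !Nat2Z.inj_mul, !Nat2Z.inj_pow. change (Z.of_nat 2) with 2.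
  replace (Z.of_nat (k-1)) with (Z.of_nat k - 1) by lia. lia.
Qed.

Lemma Qdisc (k j : nat) (c : Z) : (2 <= k)%nat -> (1 <= j <= k)%nat ->
  0 <= c <= 2 ^ (Z.of_nat k - 1) ->
  (2 * 2 ^ (Z.of_nat k - 1) < Dz (2 ^ Z.of_nat j) c <-> c = 2 ^ (Z.of_nat k - 1) /\ j = (k-1)%nat).
Proof.
  intros Hk Hj Hc. set (N := 2 ^ (Z.of_nat k - 1)) in *.
  assert (HN : 0 < N) by (apply Z.pow_pos_nonneg; lia).
  assert (Hm : 0 < 2 ^ Z.of_nat j) by (apply Z.pow_pos_nonneg; lia).
  destruct (Nat.eq_dec j k) as [->|Hjk].
  - assert (E : 2 ^ Z.of_nat k = 2 * N).
    { unfold N. replace (Z.of_nat k) with (Z.of_nat k - 1 + 1) at 1 by lia.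
      rewrite Z.pow_add_r by lia. lia. }
    rewrite E. destruct (Z.eq_dec c (2*N)); [lia|].
    rewrite Dz_small by lia. lia.
  - destruct (Nat.eq_dec j (k-1)) as [->|Hjk1].
    + replace (Z.of_nat (k-1)) with (Z.of_nat k - 1) by lia. fold N.
      destruct (Z.eq_dec c N) as [->|Hne].
      * unfold Dz, qz. replace (N + N) with (1 * (2*N)) by lia.
        rewrite Z.div_mul by lia. lia.
      * rewrite Dz_small by lia. lia.
    + assert (E : 2 * 2 ^ Z.of_nat j <= N).
      { unfold N. replace (2 * 2 ^ Z.of_nat j) with (2 ^ (Z.of_nat j + 1))
          by (rewrite Z.pow_add_r by lia; lia).
        apply Z.pow_le_mono_r; lia. }
      pose proof (Dz_le (2 ^ Z.of_nat j) c Hm). lia.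
Qed.

Lemma label_Q n j t : label (Qp n j t) = j.
Proof. unfold Qp. destruct (_ <? _); reflexivity. Qed.

Lemma Q_P (k j t : nat) : (2 <= k)%nat -> (1 <= j <= k)%nat ->
  Z.of_nat t < 2 ^ (Z.of_nat k - 1) ->
  Qp (2 * 2 ^ (Z.of_nat k - 1)) j t = Pp j t.
Proof.
  intros Hk Hj Ht. unfold Qp.
  destruct (Z.ltb_spec (2 * 2 ^ (Z.of_nat k - 1)) (Dz (2 ^ Z.of_nat j) (Z.of_nat t))) as [H|H]; auto.
  apply Qdisc in H; lia.
Qed.

Definition Inv (k t : nat) : Prop :=
  fst (state_after k t) = t /\
  Permutation (snd (state_after k t)) (map (fun j => Qp (Z.of_nat (2^k)) j t) (seq 1 k)) /\
  (t = 0%nat \/ HeadMin (snd (state_after k t))).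

Lemma elems (k t : nat) ps : (2 <= k)%nat -> Z.of_nat t < 2 ^ (Z.of_nat k - 1) ->
  Permutation ps (map (fun j => Qp (2 * 2 ^ (Z.of_nat k - 1)) j t) (seq 1 k)) ->
  forall x, In x ps -> exists l, (1 <= l <= k)%nat /\ x = Pp l t.
Proof.
  intros Hk Ht Hp x Hx. apply (Permutation_in _ Hp) in Hx.
  apply in_map_iff in Hx. destruct Hx as [l [<- Hl]]. apply in_seq in Hl.
  exists l. split; [lia|]. apply Q_P; auto; lia.
Qed.

Lemma Inv0 k : (2 <= k)%nat -> Inv k 0.
Proof.
  intros Hk. unfold Inv, state_after, init_state. simpl. split; [auto|]. split; [|auto].
  destruct (NZ_eq k ltac:(lia)) as [_ E]. rewrite E.
  apply Permutation_refl'. apply map_ext_in. intros j Hj. apply in_seq in Hj.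
  pose proof (Z.pow_pos_nonneg 2 (Z.of_nat k - 1) ltac:(lia) ltac:(lia)).
  rewrite Q_P; try lia.
  assert (Hm : 0 < 2 ^ Z.of_nat j) by (apply Z.pow_pos_nonneg; lia).
  unfold Pp. simpl. unfold Pz. rewrite Dz_small by lia. f_equal. f_equal.
  assert (qz (2 ^ Z.of_nat j) 0 = 0) as ->. { unfold qz. apply Z.div_small. lia. }
  lia.
Qed.

Lemma InvS k t : (2 <= k)%nat -> Z.of_nat t < 2 ^ (Z.of_nat k - 1) -> Inv k t -> Inv k (S t).
Proof.
  intros Hk Ht [Hc [Hp Hh]].
  destruct (NZ_eq k ltac:(lia)) as [_ En].
  set (N := 2 ^ (Z.of_nat k - 1)) in *.
  assert (HN : 0 < N) by (apply Z.pow_pos_nonneg; lia).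
  unfold Inv in *. unfold state_after in *.
  change (Nat.iter (S t) (step (2^k)) (init_state k)) with
    (step (2^k) (Nat.iter t (step (2^k)) (init_state k))).
  destruct (Nat.iter t (step (2^k)) (init_state k)) as [c ps]. simpl in Hc, Hp, Hh. subst c.
  unfold step. replace (Nat.eqb t (2^k)) with false
    by (symmetry; apply Nat.eqb_neq; intros E; rewrite E in Ht; lia).
  rewrite En in *.
  pose proof (elems k t ps Hk Ht Hp) as Hel.
  assert (Hgoal : forall ps2, Permutation ps2 (map (fun x => Qp (2*N) (label x) (S t)) ps) ->
     fst (S t, sort_peb ps2) = S t /\
     Permutation (snd (S t, sort_peb ps2)) (map (fun j => Qp (2*N) j (S t)) (seq 1 k)) /\
     (S t = 0%nat \/ HeadMin (snd (S t, sort_peb ps2)))).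
  { intros ps2 H2. simpl. split; [auto|]. split; [|right; apply sort_headmin].
    eapply perm_trans; [apply sort_perm|]. eapply perm_trans; [apply H2|].
    eapply perm_trans; [apply Permutation_map, Hp|]. rewrite map_map.
    apply Permutation_refl'. apply map_ext. intros j. rewrite label_Q. reflexivity. }
  assert (Hnm : forall l, (1 <= l <= k)%nat ->
     (Z.of_nat t + 1 + 2 ^ Z.of_nat l) mod (2 * 2 ^ Z.of_nat l) <> 0 ->
     dec_peb (Pp l t) = Qp (2*N) l (S t)).
  { intros l Hl Hmod.
    rewrite dec_nomove by (auto; lia).
    unfold Qp. replace (Z.of_nat (S t)) with (Z.of_nat t + 1) by lia.
    rewrite Dz_nomove by (auto; apply Z.pow_pos_nonneg; lia).
    destruct (Z.ltb_spec (2*N) (Dz (2 ^ Z.of_nat l) (Z.of_nat t))) as [H|H]; [|reflexivity].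
    apply Qdisc in H; lia. }
  cbv zeta.
  destruct (Nat.even (S t)) eqn:Hev.
  -
    destruct Hh as [Ht0|Hh]; [subst t; discriminate|].
    destruct ps as [|h tl].
    { apply Permutation_length in Hp. rewrite length_map, length_seq in Hp. simpl in Hp. lia. }
    assert (HSt : (S t <= 2 ^ (k-1))%nat).
    { assert (Z.of_nat (2 ^ (k-1)) = N) by (rewrite Nat2Z.inj_pow; unfold N; f_equal; lia). lia. }
    destruct (exists_move (S t) k ltac:(lia) Hev HSt ltac:(lia)) as [j0 [Hj0 Hm0]].
    replace (Z.of_nat (S t)) with (Z.of_nat t + 1) in Hm0 by lia.
    assert (Hin0 : In (Pp j0 t) (h :: tl)).
    { apply (Permutation_in _ (Permutation_sym Hp)). replace (Pp j0 t) with (Qp (2*N) j0 t) by (apply Q_P; auto; lia).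
      apply (in_map (fun j => Qp (2*N) j t)). apply in_seq. lia. }
    destruct (Hel h (or_introl eq_refl)) as [i [Hi ->]].
    assert (Hle := Hh _ Hin0). cbn [pos Pp ext_leb] in Hle. apply Z.leb_le in Hle.
    assert (Hm0p : 0 < 2 ^ Z.of_nat j0) by (apply Z.pow_pos_nonneg; lia).
    rewrite (Pz_move (2 ^ Z.of_nat j0) (Z.of_nat t) Hm0p ltac:(lia) Hm0) in Hle.
    assert (Hmi : 0 < 2 ^ Z.of_nat i) by (apply Z.pow_pos_nonneg; lia).
    pose proof (Pz_ge (2 ^ Z.of_nat i) (Z.of_nat t)).
    pose proof (Dz_ge (2 ^ Z.of_nat i) (Z.of_nat t) Hmi ltac:(lia)).
    assert (Hmovi := Dz_eq_move (2 ^ Z.of_nat i) (Z.of_nat t) Hmi ltac:(lia) ltac:(lia)).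
    assert (Hnd : NoDup (map label (Pp i t :: tl))).
    { apply Permutation_NoDup with (l := seq 1 k); [|apply seq_NoDup].
      apply Permutation_sym. eapply perm_trans; [apply Permutation_map, Hp|].
      rewrite map_map. apply Permutation_refl'. etransitivity; [|apply map_id].
      apply map_ext. intros j. apply label_Q. }
    simpl in Hnd. apply NoDup_cons_iff in Hnd. destruct Hnd as [Hnd _].
    apply Hgoal. apply Permutation_refl'. simpl. f_equal.
    + rewrite dec_move by (auto; lia). reflexivity.
    + apply map_ext_in. intros x Hx.
      destruct (Hel x (or_intror Hx)) as [l [Hl ->]]. cbn [label Pp].
      apply Hnm; auto. intros Hml.
      assert (l <> i). { intros ->. apply Hnd. apply in_map_iff. exists (Pp i t). auto. }
      destruct (Nat.lt_total l i) as [Hli|[Hli|Hli]]; [| lia |].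
      * apply (uniq_move l i (Z.of_nat t + 1)); auto.
      * apply (uniq_move i l (Z.of_nat t + 1)); auto.
  - apply Hgoal. apply Permutation_refl'. apply map_ext_in. intros x Hx.
    destruct (Hel x Hx) as [l [Hl ->]]. cbn [label Pp].
    apply Hnm; auto.
    intros Hm. destruct (pow_even l ltac:(lia)) as [h [Hh2 Hh1]]. rewrite Hh2 in Hm.
      pose proof (Z_div_exact_full_2 _ (2*(2*h)) ltac:(lia) Hm) as E.
      set (a := (Z.of_nat t + 1 + 2 * h) / (2 * (2 * h))) in E.
      assert (He : Nat.even (S t) = true).
      { apply Nat.even_spec. exists (Z.to_nat (2*h*a - h)). nia. }
      congruence.
Qed.

Lemma Inv_all k t : (2 <= k)%nat -> (t <= 2 ^ k / 2)%nat -> Inv k t.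
Proof.
  intros Hk. destruct (NZ_eq k ltac:(lia)) as [EN _].
  induction t as [|t IH]; intros Ht.
  - apply Inv0; auto.
  - apply InvS; auto; [lia|]. apply IH. lia.
Qed.

Theorem fact5 (k : nat) (hk : (2 <= k)%nat) :
  forall j : nat, (1 <= j <= k)%nat ->
    ((exists t : nat, (t <= 2 ^ k / 2)%nat /\ discarded_in (state_after k t) j)
     <-> j = (k - 1)%nat).
Proof.
  intros j Hj. destruct (NZ_eq k ltac:(lia)) as [EN En].
  assert (HN : 0 < 2 ^ (Z.of_nat k - 1)) by (apply Z.pow_pos_nonneg; lia).
  split.
  - intros [t [Ht [p [Hin [Hl Hd]]]]].
    destruct (Inv_all k t hk Ht) as [_ [Hp _]]. rewrite En in Hp.
    apply (Permutation_in _ Hp) in Hin. apply in_map_iff in Hin.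
    destruct Hin as [l [<- Hl']]. apply in_seq in Hl'. rewrite label_Q in Hl. subst l.
    unfold Qp in Hd.
    destruct (Z.ltb_spec (2 * 2 ^ (Z.of_nat k - 1)) (Dz (2 ^ Z.of_nat j) (Z.of_nat t))) as [H|H].
    + apply Qdisc in H; lia.
    + discriminate.
  - intros ->. exists (2 ^ k / 2)%nat. split; [lia|].
    destruct (Inv_all k (2 ^ k / 2) hk ltac:(lia)) as [_ [Hp _]]. rewrite En in Hp.
    exists (Qp (2 * 2 ^ (Z.of_nat k - 1)) (k-1) (2 ^ k / 2)). split; [|split].
    + apply (Permutation_in _ (Permutation_sym Hp)).
      apply (in_map (fun j => Qp (2 * 2 ^ (Z.of_nat k - 1)) j (2 ^ k / 2))). apply in_seq. lia.
    + apply label_Q.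
    + unfold Qp.
      destruct (Z.ltb_spec (2 * 2 ^ (Z.of_nat k - 1)) (Dz (2 ^ Z.of_nat (k-1)) (Z.of_nat (2^k/2)))) as [H|H].
      * reflexivity.
      * exfalso. apply Z.le_ngt in H. apply H. apply Qdisc; lia.
Qed.
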